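(* Let $p\in P_i$ be a right link state of a rook-Brauer $n$-diagram with exactly $i$ defects, and let $d_p\in\mathcal{RB}_n(\delta,\varepsilon)$ be the diagram defined by: if $\bar a$ is isolated in $p$ then $a$ and $\bar a$ are isolated in $d_p$; if $\bar a,\bar b$ are joined by a non-propagating edge in $p$ then $d_p$ has non-propagating edges $\{a,b\}$ and $\{\bar a,\bar b\}$; if $p$ has a defect at $\bar a$ then $d_p$ has the propagating edge $\{a,\bar a\}$. If $y$ is a diagram in $J_p$, then $yd_p=\delta^{\alpha}\varepsilon^{\beta}y$, where $\alpha$ is the number of non-propagating edges in $p$ and $\beta$ is the number of isolated vertices in $p$.
   Context: Let $k$ be a unital commutative ring, $n$ a positive integer, $\delta,\varepsilon\in k$. A rook-Brauer $n$-diagram is a graph on vertices $1,\dots,n$ (left column, top to bottom) and $\bar1,\dots,\bar n$ (right column) in which each edge joins two distinct vertices and each vertex lies on at most one edge; diagrams are determined by which pairs are joined. Edges joining the two columns are propagating, edges within one column non-propagating, vertices on no edge isolated. $\mathcal{RB}_n(\delta,\varepsilon)$ is the free $k$-module on these diagrams with product: identify the right column of $d_1$ with the left column of $d_2$ (middle column); let $\alpha'$ be the number of closed loops lying in the middle column and $\beta'$ the number of other connected components lying entirely in the middle column (isolated middle vertices, or paths with both ends in the middle column); let $d_3$ join two outer vertices iff they are joined by a path; $d_1d_2=\delta^{\alpha'}\varepsilon^{\beta'} d_3$. The right link state of a diagram records, for each right vertex $\bar a$, whether it lies on a propagating edge (a defect at $\bar a$), is joined by a non-propagating edge to a specified $\bar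 b$, or is isolated. $P_i$ is the set of right link states of rook-Brauer $n$-diagrams with exactly $i$ defects. A splice replaces two defects by a non-propagating edge joining their vertices; a deletion replaces a defect by an isolated vertex. $J_p$ is the left ideal of $\mathcal{RB}_n(\delta,\varepsilon)$ spanned by the diagrams whose right link state is obtained from $p$ by a (possibly empty) sequence of splices and deletions. *)

(* Defs.v *)
From mathcomp Require Import all_boot all_order all_algebra.
Set Implicit Arguments. Unset Strict Implicit. Unset Printing Implicit Defensive.
Import GRing.Theory.
Local Open Scope ring_scope.

(* Vertices: (false, a) is the left vertex a, (true, a) is the right vertex a-bar. *)
Definition vtx (n : nat) := (bool * 'I_n)%type.

(* A diagram is an involution m on the vertices: m x = x means x is isolated,
   otherwise {x, m x} is an edge.  This is exactly a partial perfect matching. *)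
Definition diagram (n : nat) :=
  {m : {ffun vtx n -> vtx n} | [forall x, m (m x) == x]}.

Definition dfun n (d : diagram n) : vtx n -> vtx n := fun x => val d x.

(* Glued graph on three columns: (0,a) left column of d1, (1,a) middle column,
   (2,a) right column of d2. *)
Definition vtx3 (n : nat) := ('I_3 * 'I_n)%type.

Definition col0 : 'I_3 := @Ordinal 3 0 isT.
Definition col1 : 'I_3 := @Ordinal 3 1 isT.
Definition col2 : 'I_3 := @Ordinal 3 2 isT.

Definition emb1 n (x : vtx n) : vtx3 n := (if x.1 then col1 else col0, x.2).
Definition emb2 n (x : vtx n) : vtx3 n := (if x.1 then col2 else col1, x.2).
Definition embo n (x : vtx n) : vtx3 n := (if x.1 then col2 else col0, x.2).

Definition glue n (d1 d2 : diagram n) : rel (vtx3 n) := fun u v =>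
  [exists x, [&& emb1 x == u, emb1 (dfun d1 x) == v & dfun d1 x != x]] ||
  [exists x, [&& emb2 x == u, emb2 (dfun d2 x) == v & dfun d2 x != x]].

Definition compo n (d1 d2 : diagram n) (u : vtx3 n) : {set vtx3 n} :=
  [set w | connect (glue d1 d2) u w].

Definition components n (d1 d2 : diagram n) : {set {set vtx3 n}} :=
  [set compo d1 d2 u | u : vtx3 n].

Definition midcol n : {set vtx3 n} := [set w : vtx3 n | w.1 == col1].

(* a component lying in the middle column is a closed loop iff every vertex of it
   has degree 2 (an edge coming from d1 and an edge coming from d2) *)
Definition is_loop n (d1 d2 : diagram n) (c : {set vtx3 n}) : bool :=
  [forall w in c, (dfun d1 (true, w.2) != (true, w.2)) &&
                  (dfun d2 (false, w.2) != (false, w.2))].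

Definition nloops n (d1 d2 : diagram n) : nat :=
  #|[set c in components d1 d2 | (c \subset midcol n) && is_loop d1 d2 c]|.
Definition nmidothers n (d1 d2 : diagram n) : nat :=
  #|[set c in components d1 d2 | (c \subset midcol n) && ~~ is_loop d1 d2 c]|.

(* z is the diagram d3: two distinct outer vertices are joined in z iff they are
   joined by a path in the glued graph. *)
Definition comp_result n (d1 d2 z : diagram n) : bool :=
  [forall x, forall y, (x != y) ==>
     ((dfun z x == y) == connect (glue d1 d2) (embo x) (embo y))].

Definition RB (k : comPzRingType) (n : nat) := {ffun diagram n -> k}.

Definition rbbasis (k : comPzRingType) n (y : diagram n) : RB k n :=
  [ffun z => (z == y)%:R].

(* bilinear extension of  d1 d2 = delta^alpha' eps^beta' d3 *)
Definition rbmul (k : comPzRingType) n (delta eps : k) (a b : RB k n) : RB k n :=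
  [ffun z => \sum_(d1 : diagram n) \sum_(d2 : diagram n)
     a d1 * b d2 * (delta ^+ nloops d1 d2 * eps ^+ nmidothers d1 d2)
       * (comp_result d1 d2 z)%:R].

(* value at a-bar: None = defect, Some None = isolated, Some (Some b) = joined to b-bar *)
Definition linkstate (n : nat) := {ffun 'I_n -> option (option 'I_n)}.

Definition rls n (d : diagram n) : linkstate n :=
  [ffun a => let y := dfun d (true, a) in
     if ~~ y.1 then None
     else if y.2 == a then Some None else Some (Some y.2)].

Definition ndefects n (p : linkstate n) : nat := #|[set a | p a == None]|.

Definition Pset n (i : nat) : {set linkstate n} :=
  [set rls d | d in [pred d : diagram n | ndefects (rls d) == i]].

Definition splice n (p : linkstate n) (a b : 'I_n) : linkstate n :=
  [ffun c => if c == a then Some (Some b) else if c == b then Some (Some a) else p c].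
Definition deletion n (p : linkstate n) (a : 'I_n) : linkstate n :=
  [ffun c => if c == a then Some None else p c].

Definition sd_step n : rel (linkstate n) := fun p q =>
  [exists a, exists b, [&& a != b, p a == None, p b == None & q == splice p a b]] ||
  [exists a, (p a == None) && (q == deletion p a)].

(* y is one of the diagrams spanning J_p *)
Definition inJ n (p : linkstate n) (y : diagram n) : bool :=
  connect (@sd_step n) p (rls y).

Definition dp_fun n (p : linkstate n) : {ffun vtx n -> vtx n} :=
  [ffun x : vtx n => match p x.2 with
                     | None => (~~ x.1, x.2)
                     | Some None => x
                     | Some (Some b) => (x.1, b)
                     end].

Lemma id_diag_proof n : [forall x : vtx n, ([ffun x => x] : {ffun vtx n -> vtx n}) ([ffun x => x] x) == x].
Proof. by apply/forallP => x; rewrite !ffunE. Qed.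

Definition id_diag n : diagram n :=
  @exist _ (fun m : {ffun vtx n -> vtx n} => [forall x, m (m x) == x])
    [ffun x => x] (id_diag_proof n).

Definition is_diagram n (m : {ffun vtx n -> vtx n}) : bool := [forall x, m (m x) == x].

(* d_p (for a genuine link state the function dp_fun p is an involution, so
   insubd returns it; the default is never used in that case) *)
Definition dp n (p : linkstate n) : diagram n := insubd (id_diag n) (dp_fun p).

Definition lalpha n (p : linkstate n) : nat :=
  #|[set a : 'I_n | [exists b : 'I_n, (p a == Some (Some b)) && (a < b)%N]]|.
Definition lbeta n (p : linkstate n) : nat := #|[set a | p a == Some None]|.

(* Main.v *)
Require Import Defs.
From mathcomp Require Import all_boot all_order all_algebra.
Import GRing.Theory.
Local Open Scope ring_scope.

Set Implicit Arguments.
Notation c0 := Defs.col0.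
Notation c1 := Defs.col1.
Notation c2 := Defs.col2.

Lemma dfun_inv n (d : diagram n) x : dfun d (dfun d x) = x.
Proof. by rewrite /dfun; case: d => m /= /forallP H; apply/eqP. Qed.

Lemma rls_cons n (d : diagram n) a b :
  rls d a = Some (Some b) -> rls d b = Some (Some a) /\ b != a.
Proof.
rewrite /rls !ffunE.
case E: (dfun d (true, a)) => [c b'] /=.
case: c E => //= E; case: eqP => // nb [<-]; split; last by apply/eqP.
have E2 : dfun d (true, b') = (true, a) by rewrite -E dfun_inv.
by rewrite E2 /=; case: eqP => // ab; case: nb.
Qed.

Lemma rls_SS n (d : diagram n) a b :
  rls d a = Some (Some b) -> dfun d (true, a) = (true, b).
Proof.
rewrite /rls !ffunE; case E: (dfun d (true, a)) => [c b'] /=.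
by case: c E => //= E; case: eqP => // _ [<-].
Qed.

Lemma rls_SN n (d : diagram n) a :
  rls d a = Some None -> dfun d (true, a) = (true, a).
Proof.
rewrite /rls !ffunE; case E: (dfun d (true, a)) => [c b'] /=.
by case: c E => //= E; case: eqP => // -> .
Qed.

Lemma rls_None n (d : diagram n) a :
  (dfun d (true, a)).1 = false -> rls d a = None.
Proof. by rewrite /rls !ffunE => ->. Qed.

Lemma inJ_inv n (p : linkstate n) y :
  inJ p y -> forall a, p a != None -> rls y a = p a.
Proof.
move=> /connectP [s]; elim: s p => [|q s IH] p /=; first by move=> _ ->.
case/andP => st pth E a pa.
have Hq : q a = p a.
  case/orP: st => [/existsP [a0 /existsP [b0 /and4P [_ pa0 pb0 /eqP ->]]] |
                   /existsP [a0 /andP [pa0 /eqP ->]]]; rewrite ffunE.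
  - case: eqP => [Ea|_]; first by rewrite Ea (eqP pa0) in pa.
    case: eqP => [Eb|_] //; by rewrite Eb (eqP pb0) in pa.
  - case: eqP => [Ea|_] //; by rewrite Ea (eqP pa0) in pa.
by rewrite -Hq; apply: IH => //; rewrite Hq.
Qed.

Lemma dp_dfun n (p : linkstate n) :
  (forall a b, p a = Some (Some b) -> p b = Some (Some a) /\ b != a) ->
  forall x, dfun (dp p) x = dp_fun p x.
Proof.
move=> Hc x; rewrite /dfun /dp insubdK //.
apply/forallP => -[b a]; rewrite !ffunE /=.
case E: (p a) => [[c|]|] /=.
- by rewrite (proj1 (Hc _ _ E)).
- by rewrite E.
- by rewrite E negbK.
Qed.

Lemma ord3_col1 (c : 'I_3) : c != c0 -> c != c2 -> c = c1.
Proof. by case: c => [[|[|[|m]]] H] //= _ _; apply: val_inj. Qed.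

Definition lab n (p : linkstate n) (y : diagram n) (u : vtx3 n) : bool * {set vtx n} :=
  if u.1 == c0 then (false, [set (false, u.2); dfun y (false, u.2)])
  else (if u.1 == c2 then false else p u.2 != None,
        [set (true, u.2); dfun y (true, u.2)]).

Lemma lab_emb1 n (p : linkstate n) y x :
  lab p y (emb1 x) = (x.1 && (p x.2 != None), [set x; dfun y x]).
Proof. by case: x => [[] a]. Qed.

Lemma lab_emb2 n (p : linkstate n) y x :
  lab p y (emb2 x) = (~~ x.1 && (p x.2 != None), [set (true, x.2); dfun y (true, x.2)]).
Proof. by case: x => [[] a]. Qed.

Lemma lab_embo n (p : linkstate n) y x :
  lab p y (embo x) = (false, [set x; dfun y x]).
Proof. by case: x => [[] a]. Qed.

Definition Hcons n (p : linkstate n) :=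
  forall a b, p a = Some (Some b) -> p b = Some (Some a) /\ b != a.
Definition HJp n (p : linkstate n) (y : diagram n) :=
  forall a, p a != None -> rls y a = p a.

Lemma G1 n (p : linkstate n) y : HJp p y ->
  forall a, p a = Some None -> dfun y (true, a) = (true, a).
Proof. by move=> HJ a E; apply: rls_SN; rewrite HJ E. Qed.

Lemma G2 n (p : linkstate n) y : HJp p y ->
  forall a b, p a = Some (Some b) -> dfun y (true, a) = (true, b).
Proof. by move=> HJ a b E; apply: rls_SS; rewrite HJ E. Qed.

Lemma G4 n (p : linkstate n) y : HJp p y ->
  forall a, (dfun y (true, a)).1 = false -> p a = None.
Proof.
move=> HJ a E; apply/eqP; apply/negP => /negP H.
by have := HJ a H; rewrite rls_None // => /esym/eqP; rewrite (negbTE H).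
Qed.

Lemma G3 n (p : linkstate n) y : Hcons p -> HJp p y ->
  forall a b, dfun y (true, a) = (true, b) -> p a = None -> p b = None.
Proof.
move=> Hc HJ a b E pa; apply/eqP; apply/negP => /negP H.
have E2 : dfun y (true, b) = (true, a) by rewrite -E dfun_inv.
have := HJ b H; rewrite /rls ffunE E2 /=.
case: eqP => [ab|_].
  by move: H; rewrite -ab pa.
by move=> /esym /Hc [] ; rewrite pa.
Qed.

Lemma Dval n (p : linkstate n) : Hcons p -> forall b a,
  dfun (dp p) (b, a) = match p a with None => (~~ b, a) | Some None => (b, a)
                                    | Some (Some c) => (b, c) end.
Proof. by move=> Hc b a; rewrite dp_dfun // ffunE. Qed.

Lemma glueP n (d1 d2 : diagram n) u v : glue d1 d2 u v ->
  (exists x, [/\ u = emb1 x, v = emb1 (dfun d1 x) & dfun d1 x != x]) \/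
  (exists x, [/\ u = emb2 x, v = emb2 (dfun d2 x) & dfun d2 x != x]).
Proof.
case/orP => /existsP [x /and3P [/eqP <- /eqP <- ne]]; [left|right]; by exists x.
Qed.

Lemma Hb n (p : linkstate n) y : Hcons p -> HJp p y -> forall x,
  x.1 && (p x.2 != None) = (dfun y x).1 && (p (dfun y x).2 != None).
Proof.
move=> Hc HJ [[] a] /=.
  case E: (dfun y (true, a)) => [[] a'] /=.
    case: (p a =P None) => [pa|pa]; case: (p a' =P None) => [pa'|pa'] //.
      by exfalso; apply: pa'; apply: (@G3 _ _ _ Hc HJ _ _ E).
    by exfalso; apply: pa; apply: (@G3 _ _ _ Hc HJ a' a) => //; rewrite -E dfun_inv.
  by rewrite (@G4 _ _ _ HJ a) // E.
case E: (dfun y (false, a)) => [[] a'] //=.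
by rewrite (@G4 _ _ _ HJ a') // -E dfun_inv.
Qed.

Lemma lab_glue n (p : linkstate n) y : Hcons p -> HJp p y -> forall u v,
  glue y (dp p) u v -> lab p y u = lab p y v.
Proof.
move=> Hc HJ u v /glueP [[x [-> -> _]] | [[b a] [-> -> ne]]].
  by rewrite !lab_emb1 dfun_inv -Hb // setUC.
rewrite !lab_emb2 /=; move: ne; rewrite !Dval //.
case E: (p a) => [[c|]|] /=.
- have [Ec _] := Hc _ _ E.
  by rewrite Ec (@G2 _ _ _ HJ _ _ E) (@G2 _ _ _ HJ _ _ Ec) setUC.
- by rewrite eqxx.
- by rewrite E !andbF.
Qed.

Lemma lab_connect n (p : linkstate n) y : Hcons p -> HJp p y -> forall u v,
  connect (glue y (dp p)) u v -> lab p y u = lab p y v.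
Proof.
move=> Hc HJ u v C.
have cl : closed (glue y (dp p)) [pred w | lab p y w == lab p y u].
  by move=> w1 w2 /(lab_glue Hc HJ) E; rewrite !inE E.
by have := closed_connect cl C; rewrite !inE eqxx => /esym/eqP.
Qed.

Lemma gy n (d1 d2 : diagram n) x : dfun d1 x != x ->
  glue d1 d2 (emb1 x) (emb1 (dfun d1 x)).
Proof. by move=> ne; apply/orP; left; apply/existsP; exists x; rewrite !eqxx. Qed.

Lemma gd n (d1 d2 : diagram n) x : dfun d2 x != x ->
  glue d1 d2 (emb2 x) (emb2 (dfun d2 x)).
Proof. by move=> ne; apply/orP; right; apply/existsP; exists x; rewrite !eqxx. Qed.

Lemma mid_right n (p : linkstate n) y c : Hcons p -> p c = None ->
  glue y (dp p) (c1, c) (c2, c).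
Proof.
move=> Hc E; have := @gd _ y (dp p) (false, c); rewrite Dval // E; apply.
by apply/eqP; case.
Qed.

Lemma y_to_outer n (p : linkstate n) (y : diagram n) (x : vtx n) : Hcons p -> HJp p y ->
  (x.1 -> p x.2 = None) ->
  dfun y x != x -> connect (glue y (dp p)) (emb1 x) (embo (dfun y x)).
Proof.
move=> Hc HJ Hx ne; apply: (connect_trans (connect1 (@gy _ y (dp p) x ne))).
case E: (dfun y x) => [[] c]; last by [].
apply: connect1; apply: mid_right => //.
case: x Hx ne E => [[] a] /= Hx ne E.
  exact: (@G3 _ _ _ Hc HJ a c E (Hx isT)).
by apply: (@G4 _ _ _ HJ c); rewrite -E dfun_inv.
Qed.

Lemma comp_self n (p : linkstate n) (y : diagram n) : Hcons p -> HJp p y ->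
  comp_result y (dp p) y.
Proof.
move=> Hc HJ; apply/forallP => x; apply/forallP => w; apply/implyP => ne.
apply/eqP; apply/idP/idP.
  move/eqP => E; case: x ne E => [[] a] ne E.
    have -> : embo (true, a) = emb2 (true, a) by [].
    case Ep: (p a) => [[c|]|].
    - have [_ ca] := Hc _ _ Ep.
      have Ew : w = (true, c) by rewrite -E (@G2 _ _ _ HJ _ _ Ep).
      apply: connect1; have := @gd _ y (dp p) (true, a); rewrite Dval // Ep Ew.
      by apply; apply/eqP; case => /eqP; rewrite (negbTE ca).
    - by move: ne; rewrite -E (@G1 _ _ _ HJ _ Ep) eqxx.
    - apply: (connect_trans (connect1 (y := (c1, a)) _)).
        have := @gd _ y (dp p) (true, a); rewrite Dval // Ep.
        by apply; apply/eqP; case.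
      rewrite -E; apply: (@y_to_outer _ p y (true, a)) => //.
      by rewrite E eq_sym.
  rewrite -E; apply: (@y_to_outer _ p y (false, a)) => //.
  by rewrite E eq_sym.
move/(lab_connect Hc HJ); rewrite !lab_embo => -[E].
have : w \in [set x; dfun y x] by rewrite E set21.
by case/set2P => [wx|->]; [rewrite wx eqxx in ne | rewrite eqxx].
Qed.

Lemma comp_uniq n (d1 d2 z z' : diagram n) :
  comp_result d1 d2 z -> comp_result d1 d2 z' -> z = z'.
Proof.
move=> /forallP H /forallP H'.
have key : forall x w, x != w -> (dfun z x == w) = (dfun z' x == w).
  move=> x w ne.
  move: (H x) (H' x) => /forallP/(_ w)/implyP/(_ ne)/eqP ->.
  by move=> /forallP/(_ w)/implyP/(_ ne)/eqP ->.
have fix1 : forall (a b : diagram n), (forall x w, x != w -> (dfun a x == w) = (dfun b x == w)) ->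
   forall x, dfun b x = x -> dfun a x = x.
  move=> a b K x Eb; case: (eqVneq (dfun a x) x) => // E.
  have := K x (dfun a x); rewrite eq_sym E eqxx Eb => /(_ isT) /esym /eqP Ex.
  by rewrite -Ex eqxx in E.
apply: val_inj; apply/ffunP => x; change (dfun z x = dfun z' x).
case: (eqVneq (dfun z' x) x) => E'.
  by rewrite E' (fix1 z z' key x E').
by apply/eqP; rewrite key 1?eq_sym // eqxx.
Qed.

Lemma compo_mid n (p : linkstate n) (y : diagram n) a w : Hcons p -> HJp p y ->
  p a != None -> w \in compo y (dp p) (c1, a) ->
  w.1 = c1 /\ (true, w.2) \in [set (true, a); dfun y (true, a)].
Proof.
move=> Hc HJ pa; rewrite inE => /(lab_connect Hc HJ).
have -> : lab p y (c1, a) = (true, [set (true, a); dfun y (true, a)]) by rewrite /lab /= pa.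
rewrite /lab; case: eqP => // h0; case: eqP => // h2 [_ ->]; split; last by rewrite set21.
by apply: ord3_col1; apply/eqP.
Qed.

Lemma compo_SN n (p : linkstate n) (y : diagram n) a : Hcons p -> HJp p y ->
  p a = Some None -> compo y (dp p) (c1, a) = [set (c1, a)].
Proof.
move=> Hc HJ E; apply/setP => w; rewrite [RHS]inE; apply/idP/eqP.
  have pa : p a != None by rewrite E.
  case/(compo_mid Hc HJ pa) => h1.
  rewrite (@G1 _ _ _ HJ _ E) setUid => /set1P [h2].
  by case: w h1 h2 => /= ? ? -> ->.
by move=> ->; rewrite inE connect0.
Qed.

Lemma compo_SS n (p : linkstate n) (y : diagram n) a b : Hcons p -> HJp p y ->
  p a = Some (Some b) -> compo y (dp p) (c1, a) = [set (c1, a); (c1, b)].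
Proof.
move=> Hc HJ E; apply/setP => w; apply/idP/idP.
  have pa : p a != None by rewrite E.
  case/(compo_mid Hc HJ pa) => h1.
  rewrite (@G2 _ _ _ HJ _ _ E) => /set2P [] [h2]; apply/set2P.
    by left; case: w h1 h2 => /= ? ? -> ->.
  by right; case: w h1 h2 => /= ? ? -> ->.
have [_ ba] := Hc _ _ E.
case/set2P => ->; rewrite inE; first exact: connect0.
apply: connect1; have := @gd _ y (dp p) (false, a); rewrite Dval // E.
by apply; apply/eqP; case => /eqP; rewrite (negbTE ba).
Qed.

Lemma compo_notmid n (p : linkstate n) (y : diagram n) u : Hcons p ->
  (u.1 != c1) || ((u.1 == c1) && (p u.2 == None)) ->
  ~~ (compo y (dp p) u \subset midcol n).
Proof.
move=> Hc H; apply/negP => /subsetP S.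
case/orP: H => [h | /andP [/eqP h1 /eqP pa]].
  by have := S u; rewrite !inE connect0 => /(_ isT); rewrite (negbTE h).
case: u h1 pa S => [u1 a] /= -> pa S.
have : (c2, a) \in midcol n by apply: S; rewrite inE connect1 // mid_right.
by rewrite inE.
Qed.

Lemma pair_ne n (s : bool) (a b : 'I_n) : b != a -> ((s, b) : vtx n) != (s, a).
Proof. by move=> ba; apply/eqP; case => /eqP; rewrite (negbTE ba). Qed.

Lemma loop_SS n (p : linkstate n) (y : diagram n) a b : Hcons p -> HJp p y ->
  p a = Some (Some b) -> is_loop y (dp p) [set (c1, a); (c1, b)].
Proof.
move=> Hc HJ E; have [Eb ba] := Hc _ _ E.
apply/forall_inP => w /set2P [] -> /=; rewrite !Dval // ?E ?Eb.
  by rewrite (@G2 _ _ _ HJ _ _ E) !pair_ne.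
by rewrite (@G2 _ _ _ HJ _ _ Eb) !pair_ne // eq_sym.
Qed.

Lemma nloop_SN n (p : linkstate n) (y : diagram n) a : Hcons p ->
  p a = Some None -> ~~ is_loop y (dp p) [set (c1, a)].
Proof.
move=> Hc E; apply/negP => /forall_inP /(_ (c1, a)); rewrite set11 /= Dval // E eqxx andbF.
by move/(_ isT).
Qed.

Lemma nmid_eq n (p : linkstate n) (y : diagram n) : Hcons p -> HJp p y ->
  nmidothers y (dp p) = lbeta p.
Proof.
move=> Hc HJ; rewrite /nmidothers /lbeta.
have -> : [set c in components y (dp p) | (c \subset midcol n) && ~~ is_loop y (dp p) c]
   = (fun a => [set ((c1, a) : vtx3 n)]) @: [set a | p a == Some None].
  apply/setP => c; rewrite inE; apply/andP/imsetP.
    case => /imsetP [[u1 a] _ ->] /andP [sub nl].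
    case: (eqVneq u1 c1) => h1; last first.
      by have := @compo_notmid _ p y (u1, a) Hc; rewrite /= h1 sub => /(_ isT).
    subst u1; case Ep: (p a) => [[b|]|].
    - by move: nl; rewrite (@compo_SS _ _ _ _ _ Hc HJ Ep) (@loop_SS _ _ _ _ _ Hc HJ Ep).
    - by exists a; rewrite ?inE ?Ep // (@compo_SN _ _ _ _ Hc HJ Ep).
    - by have := @compo_notmid _ p y (c1, a) Hc; rewrite /= Ep eqxx sub /= => /(_ isT).
  case => a; rewrite inE => /eqP Ep ->; split.
    by apply/imsetP; exists (c1, a) => //; rewrite (@compo_SN _ _ _ _ Hc HJ Ep).
  by rewrite sub1set !inE eqxx /= nloop_SN.
rewrite card_imset // => a b /setP /(_ (c1, a)); rewrite !inE eqxx.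
by move=> /esym /eqP [].
Qed.

Lemma nloops_eq n (p : linkstate n) (y : diagram n) : Hcons p -> HJp p y ->
  nloops y (dp p) = lalpha p.
Proof.
move=> Hc HJ; rewrite /nloops /lalpha.
set A := [set a : 'I_n | [exists b : 'I_n, (p a == Some (Some b)) && (a < b)%N]].
have -> : [set c in components y (dp p) | (c \subset midcol n) && is_loop y (dp p) c]
   = (fun a => compo y (dp p) (c1, a)) @: A.
  apply/setP => c; rewrite inE; apply/andP/imsetP.
    case => /imsetP [[u1 a] _ ->] /andP [sub lp].
    case: (eqVneq u1 c1) => h1; last first.
      by have := @compo_notmid _ p y (u1, a) Hc; rewrite /= h1 sub => /(_ isT).
    subst u1; case Ep: (p a) => [[b|]|].
    - have [Eb ba] := Hc _ _ Ep.
      case: (ltngtP a b) => ab.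
      + by exists a => //; rewrite inE; apply/existsP; exists b; rewrite Ep eqxx.
      + exists b; first by rewrite inE; apply/existsP; exists a; rewrite Eb eqxx.
        by rewrite (@compo_SS _ _ _ _ _ Hc HJ Ep) (@compo_SS _ _ _ _ _ Hc HJ Eb) setUC.
      + by rewrite (ord_inj ab) eqxx in ba.
    - by move: lp; rewrite (@compo_SN _ _ _ _ Hc HJ Ep) (negbTE (@nloop_SN _ _ y _ Hc Ep)).
    - by have := @compo_notmid _ p y (c1, a) Hc; rewrite /= Ep eqxx sub /= => /(_ isT).
  case => a; rewrite inE => /existsP [b /andP [/eqP Ep ab]] ->; split.
    by apply/imsetP; exists (c1, a).
  rewrite (@compo_SS _ _ _ _ _ Hc HJ Ep) (@loop_SS _ _ _ _ _ Hc HJ Ep) andbT.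
  by apply/subsetP => w /set2P [] ->; rewrite inE.
rewrite card_in_imset // => a a'.
rewrite !inE => /existsP [b /andP [/eqP Ep ab]] /existsP [b' /andP [/eqP Ep' ab']].
rewrite (@compo_SS _ _ _ _ _ Hc HJ Ep) (@compo_SS _ _ _ _ _ Hc HJ Ep') => /setP /(_ (c1, a)).
rewrite set21 => /esym /set2P [] [] // Eab.
have [Eb' _] := Hc _ _ Ep'.
move: Ep; rewrite Eab Eb' => -[Eba]; subst b.
by have := ltn_trans ab ab'; rewrite Eab ltnn.
Qed.

Unset Implicit Arguments.

Theorem lemma7p5 (k : comPzRingType) (n : nat) (delta eps : k) (i : nat)
    (p : linkstate n) (y : diagram n) :
  (0 < n)%N ->
  p \in Pset n i ->
  inJ p y ->
  rbmul delta eps (rbbasis k y) (rbbasis k (dp p)) =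
    [ffun z => delta ^+ lalpha p * eps ^+ lbeta p * rbbasis k y z].
Proof.
move=> _ /imsetP [d0 _ Ep] HJy.
have Hc : Hcons p by move=> a b; rewrite Ep; apply: rls_cons.
have HJ : HJp p y := @inJ_inv _ p y HJy.
apply/ffunP => z; rewrite !ffunE.
rewrite (bigD1 y) //= [X in _ + X]big1 ?addr0; last first.
  by move=> d1 ne; apply: big1 => d2 _; rewrite !ffunE (negbTE ne) !mul0r.
rewrite (bigD1 (dp p)) //= [X in _ + X]big1 ?addr0; last first.
  by move=> d2 ne; rewrite !ffunE (negbTE ne) mulr0 !mul0r.
rewrite !ffunE !eqxx !mul1r (nloops_eq Hc HJ) (nmid_eq Hc HJ).
have -> : comp_result y (dp p) z = (z == y).
  apply/idP/eqP => [H|->]; last exact: comp_self.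
  exact: comp_uniq H (comp_self Hc HJ).
by [].
Qed.
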